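(* Let $F,G\colon(P,u)\to(Q,v)$ be two morphisms in $\mathrm{Elt}(\mathrm{Pol}_\omega^* )$ with $(P,u)$ principal. Then $F=G$.
   Context: An $\omega$-precategory is an $\omega$-globular set with identities and compositions $u\ast_iv$ satisfying the axioms of strict $\omega$-categories except the interchange law. An $\omega$-polygraph $P$ consists of sets $P_k$ of $k$-generators with globular sources/targets in the free precategory on lower generators; $P^*$ is its free $\omega$-precategory; $\mathrm{Pol}_\omega$ is the category of $\omega$-polygraphs and generator-wise morphisms $F$, inducing prefunctors $F^*$. $\mathrm{Elt}(\mathrm{Pol}_\omega^* )$ is the category whose objects are pairs $(P,u)$ with $P$ an $\omega$-polygraph and $u$ a cell of $P^*$ (of any dimension), and whose morphisms $(P,u)\to(Q,v)$ are polygraph morphisms $F\colon P\to Q$ with $F^*(u)=v$. $(P,u)$ is principal if every morphism $(Q,v)\to(P,u)$ in this category whose underlying morphism is a monomorphism in $\mathrm{Pol}_\omega$ is an isomorphism. *)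

(* Defs.v *)
From mathcomp Require Import all_boot.

Set Implicit Arguments.
Unset Strict Implicit.
Unset Printing Implicit Defensive.

Inductive term (G : nat -> Type) : Type :=
| tgen (n : nat) (g : G n)
| tid (t : term G)              (* identity on t : raises dimension by one *)
| tcomp (i : nat) (u v : term G).

Arguments tgen {G n} g.
Arguments tid {G} t.
Arguments tcomp {G} i u v.

Fixpoint map_term (G G' : nat -> Type) (f : forall n, G n -> G' n)
  (t : term G) : term G' :=
  match t with
  | tgen n g => tgen (f n g)
  | tid t' => tid (map_term f t')
  | tcomp i u v => tcomp i (map_term f u) (map_term f v)
  end.

Record prepoly := Prepoly {
  gen : nat -> Type;
  psrc : forall k, gen k.+1 -> term gen;
  ptgt : forall k, gen k.+1 -> term gen
}.

Arguments psrc {p k} g.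
Arguments ptgt {p k} g.

Section Cells.
Variable P : prepoly.
Local Notation T := (term (gen P)).

(* source / target of a term viewed as an n-cell (n >= 1) *)
Fixpoint srcn (n : nat) (t : T) : T :=
  match t with
  | tgen m g =>
      (match m as m0 return gen P m0 -> T with
       | 0 => fun g => tgen g
       | k.+1 => fun g => psrc g
       end) g
  | tid t' => t'
  | tcomp i u v => if i == n.-1 then srcn n u else tcomp i (srcn n u) (srcn n v)
  end.

Fixpoint tgtn (n : nat) (t : T) : T :=
  match t with
  | tgen m g =>
      (match m as m0 return gen P m0 -> T with
       | 0 => fun g => tgen g
       | k.+1 => fun g => ptgt g
       end) g
  | tid t' => t'
  | tcomp i u v => if i == n.-1 then tgtn n v else tcomp i (tgtn n u) (tgtn n v)
  end.

Fixpoint srci (d n : nat) (t : T) : T :=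
  match d with 0 => t | d'.+1 => srci d' n.-1 (srcn n t) end.
Fixpoint tgti (d n : nat) (t : T) : T :=
  match d with 0 => t | d'.+1 => tgti d' n.-1 (tgtn n t) end.

Definition src_at (n i : nat) (t : T) : T := srci (n - i) n t.
Definition tgt_at (n i : nat) (t : T) : T := tgti (n - i) n t.

Definition idn (k : nat) (t : T) : T := iter k tid t.

(* cell n t : t is an n-cell of the free omega-precategory P^*;
   eqv n a b : a and b denote the same n-cell of P^*
   (congruence generated by the precategory axioms: associativity,
   unitality, compatibility of identities with compositions; no
   interchange law). *)
Inductive cell : nat -> T -> Prop :=
| c_gen n (g : gen P n) : cell n (tgen g)
| c_id n t : cell n t -> cell n.+1 (tid t)
| c_comp n i u v : i < n -> cell n u -> cell n v ->
    eqv i (tgt_at n i u) (src_at n i v) -> cell n (tcomp i u v)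
with eqv : nat -> T -> T -> Prop :=
| e_refl n t : cell n t -> eqv n t t
| e_sym n a b : eqv n a b -> eqv n b a
| e_trans n a b c : eqv n a b -> eqv n b c -> eqv n a c
| e_id n a b : eqv n a b -> eqv n.+1 (tid a) (tid b)
| e_comp n i u u' v v' : i < n -> eqv n u u' -> eqv n v v' ->
    eqv i (tgt_at n i u) (src_at n i v) ->
    eqv n (tcomp i u v) (tcomp i u' v')
| e_assoc n i u v w : i < n -> cell n u -> cell n v -> cell n w ->
    eqv i (tgt_at n i u) (src_at n i v) ->
    eqv i (tgt_at n i v) (src_at n i w) ->
    eqv n (tcomp i (tcomp i u v) w) (tcomp i u (tcomp i v w))
| e_unitl n i u : i < n -> cell n u ->
    eqv n (tcomp i (idn (n - i) (src_at n i u)) u) u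
| e_unitr n i u : i < n -> cell n u ->
    eqv n (tcomp i u (idn (n - i) (tgt_at n i u))) u
| e_idcomp n i u v : i < n -> cell n u -> cell n v ->
    eqv i (tgt_at n i u) (src_at n i v) ->
    eqv n.+1 (tid (tcomp i u v)) (tcomp i (tid u) (tid v)).

End Cells.

Arguments srcn : clear implicits.
Arguments tgtn : clear implicits.
Arguments cell : clear implicits.
Arguments eqv : clear implicits.

Definition pwf (P : prepoly) : Prop :=
  forall k (g : gen P k.+1),
    cell P k (psrc g) /\ cell P k (ptgt g) /\
    (0 < k -> eqv P k.-1 (srcn P k (psrc g)) (srcn P k (ptgt g)) /\
              eqv P k.-1 (tgtn P k (psrc g)) (tgtn P k (ptgt g))).

Record polygraph := Polygraph { ppre :> prepoly; ppwf : pwf ppre }.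

Record pmor (P Q : polygraph) := Pmor {
  pmap :> forall n, gen P n -> gen Q n;
  pmap_src : forall k (g : gen P k.+1),
      eqv Q k (map_term pmap (psrc g)) (psrc (pmap g));
  pmap_tgt : forall k (g : gen P k.+1),
      eqv Q k (map_term pmap (ptgt g)) (ptgt (pmap g))
}.

Arguments pmap {P Q} p n g.

(* F^* applied to a cell is map_term F. *)

(* Objects of Elt(Pol_omega^* ): a polygraph together with a cell of P^*
   of some dimension. *)
Record elt := Elt {
  epoly : polygraph;
  edim : nat;
  ecell : term (gen epoly);
  ecellP : cell epoly edim ecell
}.

Record emor (X Y : elt) := Emor {
  emap : pmor (epoly X) (epoly Y);
  emap_dim : edim X = edim Y;
  emap_cell : eqv (epoly Y) (edim Y) (map_term emap (ecell X)) (ecell Y)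
}.

(* Monomorphisms in Pol_omega (composition written out pointwise). *)
Definition pmono (P Q : polygraph) (F : pmor P Q) : Prop :=
  forall (R : polygraph) (H K : pmor R P),
    (forall n (g : gen R n), F n (H n g) = F n (K n g)) -> H = K.

(* Isomorphisms in Elt(Pol_omega^* ) (composites written out pointwise). *)
Definition eiso (X Y : elt) (F : emor X Y) : Prop :=
  exists G : emor Y X,
    (forall n (g : gen (epoly X) n), emap G n (emap F n g) = g) /\
    (forall n (g : gen (epoly Y) n), emap F n (emap G n g) = g).

Definition principal (X : elt) : Prop :=
  forall (Y : elt) (F : emor Y X), pmono (emap F) -> eiso F.

(* Main.v *)
Require Import Defs.
From mathcomp Require Import all_boot zify.
From Stdlib Require Import List Eqdep_dec PeanoNat ClassicalEpsilon ProofIrrelevance FunctionalExtensionality.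
Set Implicit Arguments.
Unset Strict Implicit.
Unset Printing Implicit Defensive.

Fixpoint leaves (G : nat -> Type) (t : term G) : list (sigT G) :=
  match t with
  | tgen n g => [:: existT _ n g]
  | tid t' => leaves t'
  | tcomp _ u v => leaves u ++ leaves v
  end.

Fixpoint ess (G : nat -> Type) (t : term G) : list (sigT G) :=
  match t with
  | tgen n g => [:: existT _ n g]
  | tid _ => [::]
  | tcomp _ u v => ess u ++ ess v
  end.

Section Gen.
Variable P : prepoly.
Local Notation T := (term (gen P)).

Lemma srci_add d1 d2 n (t : T) :
  srci (d1 + d2) n t = srci d2 (n - d1) (srci d1 n t).
Proof.
elim: d1 n t => [|d1 IH] n t /=; first by rewrite subn0.
rewrite IH; congr srci; lia.
Qed.

Lemma tgti_add d1 d2 n (t : T) :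
  tgti (d1 + d2) n t = tgti d2 (n - d1) (tgti d1 n t).
Proof.
elim: d1 n t => [|d1 IH] n t /=; first by rewrite subn0.
rewrite IH; congr tgti; lia.
Qed.

Lemma srci_comp j n i (a b : T) : i < n ->
  srci j n (tcomp i a b) =
  if j < n - i then tcomp i (srci j n a) (srci j n b) else srci j n a.
Proof.
elim: j n a b => [|j IH] n a b lt_in /=.
  by rewrite subn_gt0 lt_in.
case: eqP => [->|ne].
  have -> : (j.+1 < n - n.-1) = false by apply/negbTE; lia.
  by [].
rewrite IH; last lia.
have -> : (j < n.-1 - i) = (j.+1 < n - i) by apply/idP/idP; lia.
by [].
Qed.

Lemma tgti_comp j n i (a b : T) : i < n ->
  tgti j n (tcomp i a b) =
  if j < n - i then tcomp i (tgti j n a) (tgti j n b) else tgti j n b.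
Proof.
elim: j n a b => [|j IH] n a b lt_in /=.
  by rewrite subn_gt0 lt_in.
case: eqP => [->|ne].
  have -> : (j.+1 < n - n.-1) = false by apply/negbTE; lia.
  by [].
rewrite IH; last lia.
have -> : (j < n.-1 - i) = (j.+1 < n - i) by apply/idP/idP; lia.
by [].
Qed.

Lemma srci_idn j k n (s : T) : j <= k -> srci j n (idn k s) = idn (k - j) s.
Proof.
elim: j k n => [|j IH] k n le /=; first by rewrite subn0.
case: k le => [//|k] le /=.
by rewrite IH.
Qed.

Lemma tgti_idn j k n (s : T) : j <= k -> tgti j n (idn k s) = idn (k - j) s.
Proof.
elim: j k n => [|j IH] k n le /=; first by rewrite subn0.
case: k le => [//|k] le /=.
by rewrite IH.
Qed.

Lemma ess_idn k (s : T) : 0 < k -> ess (idn k s) = [::].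
Proof. by case: k. Qed.

Lemma leaves_idn k (s : T) : leaves (idn k s) = leaves s.
Proof. by elim: k => //= k ->. Qed.

Lemma SE_eqv n (a b : T) : eqv P n a b -> forall j, ess (srci j n a) = ess (srci j n b).
Proof.
elim=> {n a b}.
- by [].
- by move=> n a b _ IH j; rewrite IH.
- by move=> n a b c _ IH1 _ IH2 j; rewrite IH1 IH2.
- by move=> n a b _ IH [|j] //=.
- move=> n i u u' v v' lt _ IH1 _ IH2 _ _ j.
  rewrite !srci_comp //; case: ifP => _ /=; by rewrite ?IH1 ?IH2.
- move=> n i u v w lt _ _ _ _ _ _ _ j.
  rewrite !srci_comp //; case: ifP => h /=; by rewrite ?srci_comp ?h //= catA.
- move=> n i u lt _ j.
  rewrite srci_comp //; case: ifP => h /=.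
    by rewrite srci_idn ?ess_idn //; lia.
  have -> : j = (n - i) + (j - (n - i)) by lia.
  rewrite srci_add srci_idn // subnn /=.
  by rewrite srci_add.
- move=> n i u lt _ j.
  rewrite srci_comp //; case: ifP => h /=.
    by rewrite srci_idn ?ess_idn ?cats0 //; lia.
  by [].
- move=> n i u v lt _ _ _ _ [|j] //=.
  have -> : (i == n) = false by lia.
  by [].
Qed.

Inductive below : sigT (gen P) -> sigT (gen P) -> Prop :=
| b_refl y : below y y
| b_src k (g : gen P k.+1) y x : List.In y (leaves (psrc g)) -> below x y ->
    below x (existT _ k.+1 g)
| b_tgt k (g : gen P k.+1) y x : List.In y (leaves (ptgt g)) -> below x y ->
    below x (existT _ k.+1 g).

Lemma below_trans x y z : below x y -> below y z -> below x z.
Proof.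
move=> bxy byz; revert x bxy; induction byz as [y|k g y x' iny _ IH|k g y x' iny _ IH]=> x bx.
- by [].
- exact: b_src iny (IH _ bx).
- exact: b_tgt iny (IH _ bx).
Qed.

Definition covered (s t : list (sigT (gen P))) :=
  forall x, List.In x s -> exists y, List.In y t /\ below x y.

Lemma covered_refl s : covered s s.
Proof. by move=> x h; exists x; split=> //; constructor. Qed.

Lemma covered_trans s t r : covered s t -> covered t r -> covered s r.
Proof.
move=> h1 h2 x /h1 [y [/h2 [z [inz bz]] bx]].
by exists z; split=> //; apply: below_trans bx bz.
Qed.

Lemma covered_app s1 s2 t : covered s1 t -> covered s2 t -> covered (s1 ++ s2) t.
Proof. by move=> h1 h2 x hx; case: (in_app_or _ _ _ hx) => [/h1|/h2]. Qed.

Lemma covered_appl s t1 t2 : covered s t1 -> covered s (t1 ++ t2).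
Proof. by move=> h x /h [y [iny b]]; exists y; split=> //; apply: in_or_app; left. Qed.

Lemma covered_appr s t1 t2 : covered s t2 -> covered s (t1 ++ t2).
Proof. by move=> h x /h [y [iny b]]; exists y; split=> //; apply: in_or_app; right. Qed.

Lemma cov_srcn n (t : T) : covered (leaves (srcn P n t)) (leaves t).
Proof.
elim: t n => [m g|t IH|i u IHu v IHv] n /=.
- case: m g => [|k] g /=; first exact: covered_refl.
  move=> x inx; exists (existT _ k.+1 g); split; first by left.
  by apply: b_src inx (b_refl _).
- exact: covered_refl.
- case: eqP => _; first by apply: covered_appl.
  by apply: covered_app; [apply: covered_appl|apply: covered_appr].
Qed.

Lemma cov_tgtn n (t : T) : covered (leaves (tgtn P n t)) (leaves t).
Proof.
elim: t n => [m g|t IH|i u IHu v IHv] n /=.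
- case: m g => [|k] g /=; first exact: covered_refl.
  move=> x inx; exists (existT _ k.+1 g); split; first by left.
  by apply: b_tgt inx (b_refl _).
- exact: covered_refl.
- case: eqP => _; first by apply: covered_appr.
  by apply: covered_app; [apply: covered_appl|apply: covered_appr].
Qed.

Lemma cov_srci j n (t : T) : covered (leaves (srci j n t)) (leaves t).
Proof.
elim: j n t => [|j IH] n t /=; first exact: covered_refl.
apply: covered_trans; [apply: IH|apply: cov_srcn].
Qed.

Lemma cov_tgti j n (t : T) : covered (leaves (tgti j n t)) (leaves t).
Proof.
elim: j n t => [|j IH] n t /=; first exact: covered_refl.
apply: covered_trans; [apply: IH|apply: cov_tgtn].
Qed.

Lemma ess_leaves (t : T) : forall x, List.In x (ess t) -> List.In x (leaves t).
Proof.
elim: t => [m g|t IH|i u IHu v IHv] x //=.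
move=> hx; case: (in_app_or _ _ _ hx) => [/IHu|/IHv] h; apply: in_or_app; by [left|right].
Qed.

Lemma eqv_leaves n (a b : T) : eqv P n a b ->
  covered (leaves a) (leaves b) /\ covered (leaves b) (leaves a).
Proof.
elim=> {n a b} /=.
- by move=> *; split; apply: covered_refl.
- by move=> n a b _ [h1 h2]; split.
- by move=> n a b c _ [h1 h2] _ [h3 h4]; split; apply: covered_trans; eauto.
- by [].
- move=> n i u u' v v' _ _ [h1 h2] _ [h3 h4] _ _; split; apply: covered_app;
  by [apply: covered_appl|apply: covered_appr].
- move=> *; rewrite -!catA; split; apply: covered_refl.
- move=> n i u _ _; rewrite leaves_idn; split.
    apply: covered_app; [exact: cov_srci|exact: covered_refl].
  by apply: covered_appr; apply: covered_refl.
- move=> n i u _ _; rewrite leaves_idn; split.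
    apply: covered_app; [exact: covered_refl|exact: cov_tgti].
  by apply: covered_appl; apply: covered_refl.
- move=> *; split; apply: covered_refl.
Qed.

Definition coverS (s : list (sigT (gen P))) (p : sigT (gen P) -> Prop) :=
  forall x, List.In x s -> exists y, p y /\ below x y.

Lemma coverS_mono s p q : coverS s p ->
  (forall y, p y -> exists z, q z /\ below y z) -> coverS s q.
Proof.
move=> h1 h2 x /h1 [y [/h2 [z [qz byz]] bxy]].
by exists z; split=> //; apply: below_trans bxy byz.
Qed.

Definition SS n (t : T) y := exists j, List.In y (ess (srci j n t)).

Lemma Lambda n (t : T) : cell P n t ->
  coverS (leaves t) (SS n t) /\
  forall i, i < n -> coverS (leaves (tgt_at n i t)) (SS n t).
Proof.
elim=> {n t}.
- move=> n g; split.
    move=> x [<-|//]; exists (existT _ n g); split; last exact: b_refl.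
    by exists 0; left.
  move=> i lt x /cov_tgti [y [[<-|//] bxy]].
  by exists (existT _ n g); split=> //; exists 0; left.
- move=> n s _ [IH1 IH2].
  have lift : forall y, SS n s y -> exists z, SS n.+1 (tid s) z /\ below y z.
    move=> y [j h]; exists y; split; last exact: b_refl.
    by exists j.+1.
  split; first by apply: coverS_mono lift.
  move=> i lt.
  have -> : tgt_at n.+1 i (tid s) = tgt_at n i s.
    rewrite /tgt_at; have -> : n.+1 - i = (n - i).+1 by lia.
    by [].
  case: (ltngtP i n) => [lin|//|ein]; first by apply: coverS_mono (IH2 _ lin) lift.
  lia.
  move: IH1; rewrite ein /tgt_at subnn /= => IH1.
  by apply: coverS_mono IH1 lift.
- move=> n i a b lt _ [IHa1 IHa2] _ [IHb1 IHb2] cond.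
  have Sa : forall y, SS n a y -> exists z, SS n (tcomp i a b) z /\ below y z.
    move=> y [j h]; exists y; split; last exact: b_refl.
    exists j; rewrite srci_comp //; case: ifP => _ //=.
    by apply: in_or_app; left.
  have Sb : forall y, SS n b y -> exists z, SS n (tcomp i a b) z /\ below y z.
    move=> y [j h]; case hj: (j < n - i).
      exists y; split; last exact: b_refl.
      by exists j; rewrite srci_comp // hj /=; apply: in_or_app; right.
    move: h; have -> : j = (n - i) + (j - (n - i)) by lia.
    rewrite srci_add; have -> : n - (n - i) = i by lia.
    rewrite -/(src_at n i b) -(SE_eqv cond) => /ess_leaves /cov_srci [z [inz byz]].
    have [w [Saw bzw]] := IHa2 i lt z inz.
    have [w' [Sw' bww']] := Sa w Saw.
    exists w'; split=> //; apply: below_trans byz (below_trans bzw bww').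
  split.
    move=> x /= hx; case: (in_app_or _ _ _ hx) => h.
      by apply: coverS_mono IHa1 Sa _ h.
    by apply: coverS_mono IHb1 Sb _ h.
  move=> i' lt' x; rewrite /tgt_at tgti_comp //; case: ifP => hc /=.
    move=> hx; case: (in_app_or _ _ _ hx) => h.
      by apply: coverS_mono (IHa2 _ lt') Sa _ h.
    by apply: coverS_mono (IHb2 _ lt') Sb _ h.
  by apply: coverS_mono (IHb2 _ lt') Sb _.
Qed.

End Gen.

Section Mor.
Variables (P Q : polygraph) (F G : pmor P Q).

Definition Fh (H : pmor P Q) (y : sigT (gen P)) : sigT (gen Q) :=
  existT _ (projT1 y) (H _ (projT2 y)).

Lemma ess_map (H : pmor P Q) (t : term (gen P)) :
  ess (map_term H t) = map (Fh H) (ess t).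
Proof.
elim: t => [m g|t IH|i u IHu v IHv] //=.
by rewrite IHu IHv map_app.
Qed.

Lemma SE_map (H : pmor P Q) j : forall n (t : term (gen P)), cell P n t ->
  ess (srci j n (map_term H t)) = map (Fh H) (ess (srci j n t)).
Proof.
elim: j => [|j IHj] n t ct; first exact: ess_map.
elim: ct => {n t}.
- move=> [|k] g /=.
    by have := IHj 0 (tgen g) (c_gen g).
  have [c1 _] := ppwf g.
  rewrite -(SE_eqv (pmap_src H g)).
  exact: IHj.
- by move=> n s cs _ /=; apply: IHj.
- move=> n i a b lt _ IHa _ IHb _.
  have -> : map_term H (tcomp i a b) = tcomp i (map_term H a) (map_term H b) by [].
  rewrite !srci_comp //; case: ifP => _ //=.
  by rewrite IHa IHb map_app.
Qed.

Definition agree (y : sigT (gen P)) := F _ (projT2 y) = G _ (projT2 y).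

Lemma map_eq_in (s : list (sigT (gen P))) :
  map (Fh F) s = map (Fh G) s -> forall y, List.In y s -> agree y.
Proof.
elim: s => [//|a s IH] /= [e1 e2] y [<-|/IH]; last by apply.
rewrite /Fh in e1.
exact: (inj_pair2_eq_dec _ Nat.eq_dec _ _ _ _ e1).
Qed.

Lemma agree_SS n (t : term (gen P)) : cell P n t ->
  eqv Q n (map_term F t) (map_term G t) -> forall y, SS n t y -> agree y.
Proof.
move=> ct e y [j h].
apply: (map_eq_in _ h).
by rewrite -!SE_map // (SE_eqv e).
Qed.

Lemma celldim n (t : term (gen P)) : cell P n t ->
  forall x, List.In x (leaves t) -> projT1 x <= n.
Proof.
elim=> {n t}.
- by move=> n g x [<-|].
- by move=> n t _ IH x /IH; lia.
- move=> n i u v _ _ IHu _ IHv _ x /= hx.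
  by case: (in_app_or _ _ _ hx) => [/IHu|/IHv].
Qed.

Lemma belowdim x y : @below P x y -> projT1 x <= projT1 y.
Proof.
elim=> {x y} //.
- move=> k g y x iny _ IH; have [c1 _] := ppwf g.
  have := celldim c1 iny; rewrite /=; lia.
- move=> k g y x iny _ IH; have [_ [c2 _]] := ppwf g.
  have := celldim c2 iny; rewrite /=; lia.
Qed.

Lemma Phi d : forall y, projT1 y <= d -> agree y -> forall x, below x y -> agree x.
Proof.
elim: d => [|d IHd] y hy ay x bxy.
  by case: bxy hy ay => //= *; lia.
have sub : forall k t, k <= d -> cell P k t ->
    eqv Q k (map_term F t) (map_term G t) ->
    forall y', List.In y' (leaves t) -> agree y'.
  move=> k t kd ct et y' iny.
  have [L1 _] := Lambda ct.
  have [z [Sz byz]] := L1 _ iny.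
  have az := agree_SS ct et Sz.
  apply: (IHd z) byz => //.
  move: Sz => [j /ess_leaves /cov_srci [w [inw bzw]]].
  have := belowdim bzw; have := celldim ct inw; lia.
elim: bxy hy ay => {x y}.
- by [].
- move=> k g y' x iny bx IH /= hk ag.
  have [c1 _] := ppwf g.
  apply: IH; first by have := celldim c1 iny; lia.
  apply: (sub k (psrc g) _ c1 _ _ iny); first lia.
  apply: e_trans (pmap_src F g) _; rewrite ag; apply: e_sym; exact: pmap_src.
- move=> k g y' x iny bx IH /= hk ag.
  have [_ [c1 _]] := ppwf g.
  apply: IH; first by have := celldim c1 iny; lia.
  apply: (sub k (ptgt g) _ c1 _ _ iny); first lia.
  apply: e_trans (pmap_tgt F g) _; rewrite ag; apply: e_sym; exact: pmap_tgt.
Qed.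

Lemma all_good n (t : term (gen P)) : cell P n t ->
  eqv Q n (map_term F t) (map_term G t) ->
  forall x, List.In x (leaves t) -> forall h, below h x -> agree h.
Proof.
move=> ct et x inx h bhx.
have [L1 _] := Lambda ct.
have [z [Sz bxz]] := L1 _ inx.
apply: (Phi (leqnn _) (agree_SS ct et Sz)).
exact: below_trans bhx bxz.
Qed.

End Mor.

Scheme cell_mind := Induction for cell Sort Prop
  with eqv_mind := Induction for eqv Sort Prop.
Combined Scheme celleqv_mind from cell_mind, eqv_mind.

Section Sub.
Variables (P : polygraph) (gdx : sigT (gen P) -> Prop).
Hypothesis gd_down : forall x y, below x y -> gdx y -> gdx x.

Definition genE n := {g : gen P n | gdx (existT _ n g)}.
Definition incl n (g : genE n) : gen P n := proj1_sig g.

Lemma good_pre (t : term (gen P)) :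
  (forall x, List.In x (leaves t) -> gdx x) -> exists t', map_term incl t' = t.
Proof.
elim: t => [m g|t IH|i u IHu v IHv] /= h.
- by exists (tgen (exist _ g (h _ (or_introl erefl)))).
- by have [t' <-] := IH h; exists (tid t').
- have [u' <-] := IHu (fun x hx => h x (in_or_app _ _ _ (or_introl hx))).
  have [v' <-] := IHv (fun x hx => h x (in_or_app _ _ _ (or_intror hx))).
  by exists (tcomp i u' v').
Qed.

Lemma good_map (t' : term genE) : forall x, List.In x (leaves (map_term incl t')) -> gdx x.
Proof.
elim: t' => [m g|t IH|i u IHu v IHv] /= x.
- by move=> [<-|//]; exact: (proj2_sig g).
- exact: IH.
- by move=> hx; case: (in_app_or _ _ _ hx) => [/IHu|/IHv].
Qed.

Lemma map_inj (a b : term genE) : map_term incl a = map_term incl b -> a = b.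
Proof.
elim: a b => [m g|t IH|i u IHu v IHv] [m' g'|t'|i' u' v'] //= e.
- have em : m = m' by case: e.
  subst m'.
  have e2 : existT (gen P) m (incl g) = existT (gen P) m (incl g').
    by case: e.
  have e3 := inj_pair2_eq_dec _ Nat.eq_dec _ _ _ _ e2.
  move: g g' e3 {e e2} => [g pg] [g' pg'] /= e3; subst g'.
  by rewrite (proof_irrelevance _ pg pg').
- by case: e => /IH ->.
- by case: e => -> /IHu -> /IHv ->.
Qed.

Lemma good_psrc k (g : genE k.+1) : exists t', map_term incl t' = psrc (incl g).
Proof.
apply: good_pre => x hx.
apply: (gd_down (b_src hx (b_refl _))).
exact: (proj2_sig g).
Qed.

Lemma good_ptgt k (g : genE k.+1) : exists t', map_term incl t' = ptgt (incl g).
Proof.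
apply: good_pre => x hx.
apply: (gd_down (b_tgt hx (b_refl _))).
exact: (proj2_sig g).
Qed.

Definition psrcE k (g : genE k.+1) : term genE :=
  proj1_sig (constructive_indefinite_description _ (good_psrc g)).
Definition ptgtE k (g : genE k.+1) : term genE :=
  proj1_sig (constructive_indefinite_description _ (good_ptgt g)).

Lemma psrcE_spec k (g : genE k.+1) : map_term incl (psrcE g) = psrc (incl g).
Proof. exact: (proj2_sig (constructive_indefinite_description _ (good_psrc g))). Qed.
Lemma ptgtE_spec k (g : genE k.+1) : map_term incl (ptgtE g) = ptgt (incl g).
Proof. exact: (proj2_sig (constructive_indefinite_description _ (good_ptgt g))). Qed.

Definition PE : prepoly := @Prepoly genE psrcE ptgtE.

Lemma map_srcn n (t : term (gen PE)) :
  map_term incl (srcn PE n t) = srcn P n (map_term incl t).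
Proof.
elim: t n => [m g|t IH|i u IHu v IHv] n /=.
- by case: m g => [|k] g //=; rewrite psrcE_spec.
- by [].
- by case: eqP => _ //=; rewrite IHu ?IHv.
Qed.

Lemma map_tgtn n (t : term (gen PE)) :
  map_term incl (tgtn PE n t) = tgtn P n (map_term incl t).
Proof.
elim: t n => [m g|t IH|i u IHu v IHv] n /=.
- by case: m g => [|k] g //=; rewrite ptgtE_spec.
- by [].
- by case: eqP => _ //=; rewrite IHu ?IHv.
Qed.

Lemma map_srci j n (t : term (gen PE)) :
  map_term incl (srci j n t) = srci j n (map_term incl t).
Proof. by elim: j n t => [|j IH] n t //=; rewrite IH map_srcn. Qed.

Lemma map_tgti j n (t : term (gen PE)) :
  map_term incl (tgti j n t) = tgti j n (map_term incl t).
Proof. by elim: j n t => [|j IH] n t //=; rewrite IH map_tgtn. Qed.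

Lemma map_src_at n i (t : term (gen PE)) :
  map_term incl (src_at n i t) = src_at n i (map_term incl t).
Proof. exact: map_srci. Qed.

Lemma map_tgt_at n i (t : term (gen PE)) :
  map_term incl (tgt_at n i t) = tgt_at n i (map_term incl t).
Proof. exact: map_tgti. Qed.

Lemma map_idn k (t : term (gen PE)) :
  map_term incl (idn k t) = idn k (map_term incl t).
Proof. by elim: k => //= k ->. Qed.

Lemma transport :
  (forall n t, cell P n t -> forall t', map_term incl t' = t -> cell PE n t') /\
  (forall n a b, eqv P n a b -> forall a' b', map_term incl a' = a ->
      map_term incl b' = b -> eqv PE n a' b').
Proof.
apply (@celleqv_mind (ppre P)
  (fun n t _ => forall t', map_term incl t' = t -> cell PE n t')
  (fun n a b _ => forall a' b', map_term incl a' = a ->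
      map_term incl b' = b -> eqv PE n a' b')).
- move=> n g [m h|//|//] /= e.
  have em : m = n by case: e.
  by subst m; apply: c_gen.
- move=> n t c IH [//|s|//] /= [e].
  exact: c_id (IH _ e).
- move=> n i u v lt cu IHu cv IHv e IHe [//|//|i' u' v'] /= [ei eu ev]; subst i'.
  apply: c_comp lt (IHu _ eu) (IHv _ ev) _.
  by apply: IHe; rewrite ?map_tgt_at ?map_src_at ?eu ?ev.
- move=> n t c IH a' b' ea eb.
  have eab : a' = b' by apply: map_inj; rewrite ea eb.
  subst b'; exact: e_refl (IH _ ea).
- move=> n a b e IH a' b' ea eb; exact: e_sym (IH _ _ eb ea).
- move=> n a b c e1 IH1 e2 IH2 a' b' ea eb.
  have [c' ec] : exists c', map_term incl c' = b.
    apply: good_pre => x hx.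
    have [_ cov] := eqv_leaves e1.
    have [y [iny bxy]] := cov x hx.
    apply: (gd_down bxy); apply: (good_map (t' := a')); by rewrite ea.
  exact: e_trans (IH1 _ _ ea ec) (IH2 _ _ ec eb).
- move=> n a b e IH [//|a0|//] [//|b0|//] /= [ea] [eb].
  exact: e_id (IH _ _ ea eb).
- move=> n i u u' v v' lt e1 IH1 e2 IH2 e3 IH3 [//|//|i1 u0 v0] [//|//|i2 u1 v1]
    /= [ei1 eu0 ev0] [ei2 eu1 ev1]; subst i1 i2.
  apply: e_comp lt (IH1 _ _ eu0 eu1) (IH2 _ _ ev0 ev1) _.
  by apply: IH3; rewrite ?map_tgt_at ?map_src_at ?eu0 ?ev0.
- move=> n i u v w lt cu IHu cv IHv cw IHw e1 IH1 e2 IH2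
    [//|//|i1 [//|//|i2 u0 v0] w0] [//|//|i3 u1 [//|//|i4 v1 w1]]
    /= [ei1 ei2 eu0 ev0 ew0] [ei3 eu1 ei4 ev1 ew1]; subst i1 i2 i3 i4.
  have -> : u1 = u0 by apply: map_inj; rewrite eu0 eu1.
  have -> : v1 = v0 by apply: map_inj; rewrite ev0 ev1.
  have -> : w1 = w0 by apply: map_inj; rewrite ew0 ew1.
  apply: e_assoc lt (IHu _ eu0) (IHv _ ev0) (IHw _ ew0) _ _.
    by apply: IH1; rewrite ?map_tgt_at ?map_src_at ?eu0 ?ev0.
  by apply: IH2; rewrite ?map_tgt_at ?map_src_at ?ev0 ?ew0.
- move=> n i u lt cu IHu [//|//|i1 x u0] b' /= [ei ex eu] eb; subst i1.
  have -> : b' = u0 by apply: map_inj; rewrite eu eb.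
  have -> : x = idn (P:=PE) (n - i) (src_at (P:=PE) n i u0).
    by apply: map_inj; rewrite ex map_idn map_src_at eu.
  exact: e_unitl lt (IHu _ eu).
- move=> n i u lt cu IHu [//|//|i1 u0 x] b' /= [ei eu ex] eb; subst i1.
  have -> : b' = u0 by apply: map_inj; rewrite eu eb.
  have -> : x = idn (P:=PE) (n - i) (tgt_at (P:=PE) n i u0).
    by apply: map_inj; rewrite ex map_idn map_tgt_at eu.
  exact: e_unitr lt (IHu _ eu).
- move=> n i u v lt cu IHu cv IHv e IHe [//|[//|//|i1 u0 v0]|//]
    [//|//|i2 [//|u1|//] [//|v1|//]] /= [ei1 eu0 ev0] [ei2 eu1 ev1]; subst i1 i2.
  have -> : u1 = u0 by apply: map_inj; rewrite eu0 eu1.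
  have -> : v1 = v0 by apply: map_inj; rewrite ev0 ev1.
  apply: e_idcomp lt (IHu _ eu0) (IHv _ ev0) _.
  by apply: IHe; rewrite ?map_tgt_at ?map_src_at ?eu0 ?ev0.
Qed.

End Sub.

Lemma pmor_ext (P Q : polygraph) (H K : pmor P Q) :
  (forall n g, H n g = K n g) -> H = K.
Proof.
case: H K => [h hs ht] [k ks kt] /= e.
have ehk : h = k.
  apply: functional_extensionality_dep => n.
  apply: functional_extensionality => g; exact: e.
subst k; f_equal; apply: proof_irrelevance.
Qed.

Theorem lemma4p6 (X Y : elt) (F G : emor X Y) :
  principal X -> emap F = emap G.
Proof.
move=> pr.
case: X F G pr => P n u cu F G pr /=.
have et : eqv (epoly Y) n (map_term (emap F) u) (map_term (emap G) u).
  have e1 := emap_cell F; have e2 := emap_cell G.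
  rewrite /= -(emap_dim F) in e1; rewrite /= -(emap_dim G) in e2.
  exact: e_trans e1 (e_sym e2).
pose gdx := fun x => forall h, @below P h x -> agree (emap F) (emap G) h.
have gd_down : forall x y, below x y -> gdx y -> gdx x.
  by move=> x y bxy gy h bhx; apply: gy; apply: below_trans bhx bxy.
have goodu : forall x, List.In x (leaves u) -> gdx x.
  by move=> x inx h bhx; apply: (all_good cu et inx bhx).
have [u' eu'] := good_pre goodu.
have [Tc Te] := transport gd_down.
have pwfE : pwf (PE gd_down).
  move=> k g.
  have [c1 [c2 glob]] := ppwf (incl g).
  split; first by apply: (Tc _ _ c1); rewrite psrcE_spec.
  split; first by apply: (Tc _ _ c2); rewrite ptgtE_spec.
  move=> /glob [g1 g2]; split.
    by apply: (Te _ _ _ g1); rewrite map_srcn ?psrcE_spec ?ptgtE_spec.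
  by apply: (Te _ _ _ g2); rewrite map_tgtn ?psrcE_spec ?ptgtE_spec.
pose PY := Polygraph pwfE.
have cu' : cell PY n u' by apply: (Tc _ _ cu).
pose XY := Elt cu'.
have isrc : forall k (g : gen PY k.+1),
    eqv P k (map_term (@incl P gdx) (psrc g)) (psrc (incl g)).
  move=> k g /=; rewrite psrcE_spec; have [c1 _] := ppwf (incl g); exact: e_refl.
have itgt : forall k (g : gen PY k.+1),
    eqv P k (map_term (@incl P gdx) (ptgt g)) (ptgt (incl g)).
  move=> k g /=; rewrite ptgtE_spec; have [_ [c1 _]] := ppwf (incl g); exact: e_refl.
pose im : pmor PY P := Pmor isrc itgt.
have imc : eqv P n (map_term im u') u by rewrite /= eu'; exact: e_refl.
pose iem : emor XY (Elt cu) := @Emor XY (Elt cu) im erefl imc.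
have mono : pmono (emap iem).
  move=> R H K e; apply: pmor_ext => m g.
  have := e m g; rewrite /= /incl.
  case: (H m g) => [x px]; case: (K m g) => [y py] /= exy; subst y.
  by rewrite (proof_irrelevance _ px py).
have [G' [_ h2]] := pr XY iem mono.
apply: pmor_ext => m g.
have gg : gdx (existT _ m g).
  rewrite -(h2 m g) /=; exact: (proj2_sig (emap G' m g)).
exact: (gg _ (b_refl _)).
Qed.
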